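(* Let $q=2$, $0\le J\le\pi/4$, and $U(J)=\begin{pmatrix}e^{-iJ}&0&0&0\\0&0&-ie^{iJ}&0\\0&-ie^{iJ}&0&0\\0&0&0&e^{-iJ}\end{pmatrix}$ in the basis $|00\rangle,|01\rangle,|10\rangle,|11\rangle$, so that $e_p(U(J))=\frac23\cos^2(2J)$. For a single-qubit unitary $u$, let $\Lambda(u)$ be the largest modulus of the nontrivial eigenvalues of the map $a\mapsto u\,\mathcal{M}_+^{U(J)}(a)\,u^\dagger$. (i) Over the family $w(\theta,\psi)=\begin{pmatrix}\cos\frac\theta2&-e^{i\psi/2}\sin\frac\theta2\\ e^{-i\psi/2}\sin\frac\theta2&\cos\frac\theta2\end{pmatrix}$, $\theta\in[0,\pi]$, $\psi\in[0,4\pi]$, one has $\min_{\theta,\psi}\Lambda(w)=\sqrt{\sin 2J}$, i.e. $-\ln\min\Lambda=-\frac14\ln\bigl(1-\tfrac32 e_p(U(J))\bigr)$. (ii) Over the family $v(\phi,\psi)=\frac1{\sqrt2}\begin{pmatrix}e^{i\phi/2}&-e^{i\psi/2}\\ e^{-i\psi/2}&e^{-i\phi/2}\end{pmatrix}$, $\phi,\psi\in[0,4\pi]$, the nontrivial eigenvalues are the roots of $\lambda^3-(\lambda^2-\lambda)\cos\phi\,\sin 2J-\sin^2 2J=0$, and $\min_{\phi,\psi}\Lambda(v)=\sin^{2/3}(2J)$, attained at $\phi=\pi/2$; i.e. $-\ln\min\Lambda=-\frac13\ln\bigl(1-\tfrac32 e_p(U(J))\bigr)$.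
   Context: For a unitary $U$ on $\mathbb{C}^2\otimes\mathbb{C}^2$, $\mathcal{M}_+^U(a)=\frac12\operatorname{tr}_1[U^\dagger(a\otimes I)U]$ on $2\times2$ matrices; it fixes $I$ and preserves traceless matrices, and so does $a\mapsto u\mathcal{M}_+^U(a)u^\dagger$; the nontrivial eigenvalues of such a map are the three eigenvalues of its restriction to traceless matrices. (For $U(J)$ one has $\mathcal{M}_+^{U(J)}(a)=\begin{pmatrix}a_{00}&\sin(2J)a_{01}\\ \sin(2J)a_{10}&a_{11}\end{pmatrix}$.) The entangling power $e_p$ is $e_p(U)=\frac{E(U)+E(US)-E(S)}{E(S)}$ with $E(U)=1-q^{-4}\operatorname{tr}[(U^{R_1}U^{R_1\dagger})^2]$, $\langle\beta\alpha|U^{R_1}|ji\rangle=\langle i\alpha|U|j\beta\rangle$, $S$ the swap, $q=2$. *)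

(* Defs.v *)
(* R : realType (MathComp-Analysis), complex numbers R[i]
   from mathcomp-real-closed, 2-qubit operators as 'M[R[i]]_(2*2) with the
   tensor index of mxtens (|ij> <-> mxtens_index (i,j) = 2i+j). *)
From HB Require Import structures.
From mathcomp Require Import all_boot all_order all_algebra.
From mathcomp Require Import complex mxtens.
From mathcomp Require Import all_classical all_reals.
From mathcomp Require Import topology normedtype exp trigo.

Set Implicit Arguments.
Unset Strict Implicit.
Unset Printing Implicit Defensive.

Import Order.TTheory GRing.Theory Num.Theory.
Local Open Scope ring_scope.
Local Open Scope complex_scope.

Section QDefs.
Variable R : realType.
Local Notation C := R[i].

Definition expi (x : R) : C := cos x +i* sin x.

Definition dag m n (A : 'M[C]_(m, n)) : 'M[C]_(n, m) := map_mx conjc A^T.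

Definition kid (i j : 'I_2) : 'I_(2 * 2) := mxtens_index (i, j).

Definition UJ (J : R) : 'M[C]_(2 * 2) :=
  \matrix_(r < 2 * 2, c < 2 * 2)
    match val r, val c with
    | 0%N, 0%N => expi (- J)
    | 1%N, 2%N => - 'i * expi J
    | 2%N, 1%N => - 'i * expi J
    | 3%N, 3%N => expi (- J)
    | _, _ => 0
    end.

(* M_+^U(a) = 1/2 tr_1 [U^dagger (a (x) I) U] *)
Definition Mplus (U : 'M[C]_(2 * 2)) (a : 'M[C]_2) : 'M[C]_2 :=
  \matrix_(j < 2, l < 2)
    ((2%:R)^-1 * \sum_(i < 2) (dag U *m (a *t (1%:M : 'M[C]_2)) *m U) (kid i j) (kid i l)).

Definition Phi (u : 'M[C]_2) (U : 'M[C]_(2 * 2)) (a : 'M[C]_2) : 'M[C]_2 :=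
  u *m Mplus U a *m dag u.

(* nontrivial eigenvalues: eigenvalues of the restriction of f to the
   (f-invariant) subspace of traceless matrices *)
Definition nontriv_eig (f : 'M[C]_2 -> 'M[C]_2) (l : C) : Prop :=
  exists a : 'M[C]_2, a != 0 /\ \tr a = 0 /\ f a = l *: a.

Definition Lambda (f : 'M[C]_2 -> 'M[C]_2) : R :=
  sup [set x : R | exists l : C, nontriv_eig f l /\ x = Normc.normc l].

Definition wfam (theta psi : R) : 'M[C]_2 :=
  \matrix_(r < 2, c < 2)
    match val r, val c with
    | 0%N, 0%N => (cos (theta / 2))%:C
    | 0%N, 1%N => - expi (psi / 2) * (sin (theta / 2))%:C
    | 1%N, 0%N => expi (- (psi / 2)) * (sin (theta / 2))%:C
    | _, _ => (cos (theta / 2))%:C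
    end.

Definition vfam (phi psi : R) : 'M[C]_2 :=
  \matrix_(r < 2, c < 2)
    (((Num.sqrt 2)^-1)%:C *
    match val r, val c with
    | 0%N, 0%N => expi (phi / 2)
    | 0%N, 1%N => - expi (psi / 2)
    | 1%N, 0%N => expi (- (psi / 2))
    | _, _ => expi (- (phi / 2))
    end).

(* realignment: <beta alpha| U^{R_1} |j i> = <i alpha| U |j beta> *)
Definition realign (U : 'M[C]_(2 * 2)) : 'M[C]_(2 * 2) :=
  \matrix_(r < 2 * 2, c < 2 * 2)
    U (kid (mxtens_unindex c).2 (mxtens_unindex r).2)
      (kid (mxtens_unindex c).1 (mxtens_unindex r).1).

Definition swap2 : 'M[C]_(2 * 2) :=
  \matrix_(r < 2 * 2, c < 2 * 2)
    (((mxtens_unindex r).1 == (mxtens_unindex c).2) &&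
     ((mxtens_unindex r).2 == (mxtens_unindex c).1))%:R.

(* E(U) = 1 - q^{-4} tr[(U^{R1} U^{R1 dagger})^2], q = 2; the trace is real,
   we take its real part to get a real number *)
Definition Eop (U : 'M[C]_(2 * 2)) : R :=
  1 - (2%:R ^+ 4)^-1 * complex.Re (\tr ((realign U *m dag (realign U)) ^+ 2)).

Definition ep (U : 'M[C]_(2 * 2)) : R :=
  (Eop U + Eop (U *m swap2) - Eop swap2) / Eop swap2.

Definition is_min (S : set R) (m : R) : Prop :=
  S m /\ forall y, S y -> m <= y.

End QDefs.

(* Main.v *)
Require Import Defs.
From HB Require Import structures.
From mathcomp Require Import all_boot all_order all_algebra.
From mathcomp Require Import complex mxtens.
From mathcomp Require Import all_classical all_reals.
From mathcomp Require Import topology normedtype exp trigo.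
Import Order.TTheory GRing.Theory Num.Theory.
Local Open Scope ring_scope.
Local Open Scope classical_set_scope.
Local Open Scope complex_scope.
From mathcomp Require Import ring lra.
Set Warnings "-notation-overridden,-ambiguous-paths,-notation-incompatible-prefix,-deprecated".
Set Implicit Arguments. Unset Strict Implicit. Unset Printing Implicit Defensive.
Section S.
Variable F : fieldType.
Definition mk3 (a b c d e f g h k : F) : 'M[F]_3 :=
  \matrix_(i < 3, j < 3) match val i, val j with
   | 0%N, 0%N => a | 0%N, 1%N => b | 0%N, _ => c
   | 1%N, 0%N => d | 1%N, 1%N => e | 1%N, _ => f
   | _, 0%N => g | _, 1%N => h | _, _ => k end.
Lemma det_mk3 a b c d e f g h k :
  \det (mk3 a b c d e f g h k) = a*(e*k - f*h) - b*(d*k - f*g) + c*(d*h - e*g).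
Proof.
rewrite (expand_det_row _ 0) !big_ord_recr big_ord0 /= /cofactor.
rewrite !(expand_det_row _ 0) !big_ord_recr !big_ord0 /= /cofactor.
rewrite !det_mx11 !mxE /= !expr0 !expr1 ; ring.
Qed.
End S.
Section Q.
Variable R : realType.
Local Notation C := R[i].

Definition mk2 (x y z w : C) : 'M[C]_2 :=
  \matrix_(i < 2, j < 2) match val i, val j with
   | 0%N, 0%N => x | 0%N, _ => y | _, 0%N => z | _, _ => w end.
Definition row3 (x y z : C) : 'rV[C]_3 :=
  \row_(j < 3) match val j with 0%N => x | 1%N => y | _ => z end.

Lemma mk2E (a : 'M[C]_2) : a = mk2 (a 0 0) (a 0 1) (a 1 0) (a 1 1).
Proof.
apply/matrixP => i j; rewrite mxE.
case: i => [[|[|?]] Hi]; case: j => [[|[|?]] Hj] //=; congr (a _ _); exact: val_inj.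
Qed.

Lemma row3E (v : 'rV[C]_3) : v = row3 (v 0 0) (v 0 1) (v 0 2).
Proof.
apply/matrixP => i j; rewrite mxE; rewrite (ord1 i).
case: j => [[|[|[|?]]] Hj] //=; congr (v _ _); exact: val_inj.
Qed.

Lemma mk2_inj x y z w x' y' z' w' :
  mk2 x y z w = mk2 x' y' z' w' -> [/\ x = x', y = y', z = z' & w = w'].
Proof.
move/matrixP => H.
have := H 0 0; have := H 0 1; have := H 1 0; have := H 1 1.
by rewrite !mxE /= => -> -> -> ->.
Qed.

Lemma mk2_eq0 x y z w : (mk2 x y z w == 0) = [&& x == 0, y == 0, z == 0 & w == 0].
Proof.
apply/eqP/idP.
  move/matrixP => H; have := H 0 0; have := H 0 1; have := H 1 0; have := H 1 1.
  by rewrite !mxE /= => -> -> -> ->; rewrite eqxx.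
by case/and4P => /eqP-> /eqP-> /eqP-> /eqP->; apply/matrixP => i j; rewrite !mxE; case: i => [[|[|?]] ?]; case: j => [[|[|?]] ?].
Qed.

Lemma row3_eq0 x y z : (row3 x y z == 0) = [&& x == 0, y == 0 & z == 0].
Proof.
apply/eqP/idP.
  move/matrixP => H; have := H 0 0; have := H 0 1; have := H 0 2.
  by rewrite !mxE /= => -> -> ->; rewrite eqxx.
by case/and3P => /eqP-> /eqP-> /eqP->; apply/matrixP => i j; rewrite !mxE; case: j => [[|[|[|?]]] ?].
Qed.

Lemma tr_mk2 x y z w : \tr (mk2 x y z w) = x + w.
Proof. by rewrite /mxtrace !big_ord_recr big_ord0 /= !mxE /= add0r. Qed.

Lemma scale_mk2 l x y z w : l *: mk2 x y z w = mk2 (l*x) (l*y) (l*z) (l*w).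
Proof. by apply/matrixP => i j; rewrite !mxE; case: i => [[|[|?]] ?]; case: j => [[|[|?]] ?]. Qed.

Lemma row3_mul x y z (A : 'M[C]_3) j :
  (row3 x y z *m A) 0 j = x * A 0 j + y * A 1 j + z * A 2 j.
Proof.
rewrite mxE !big_ord_recr big_ord0 /= !mxE /= add0r.
by congr (_ * A _ _ + _ * A _ _ + _ * A _ _); apply: val_inj.
Qed.

Lemma eig_det (f : 'M[C]_2 -> 'M[C]_2) (A : 'M[C]_3) :
  (forall z x y, f (mk2 z x y (- z)) =
     mk2 ((row3 z x y *m A) 0 0) ((row3 z x y *m A) 0 1)
         ((row3 z x y *m A) 0 2) (- (row3 z x y *m A) 0 0)) ->
  forall l, nontriv_eig f l <-> \det (A - l%:M) = 0.
Proof.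
move=> Hf l; split.
  case=> a [a0 [ta fa]].
  apply/eqP/det0P; exists (row3 (a 0 0) (a 0 1) (a 1 0)).
    rewrite row3_eq0; apply: contra a0 => /and3P[/eqP h1 /eqP h2 /eqP h3].
    rewrite (mk2E a) mk2_eq0 h1 h2 h3 eqxx /=.
    have : a 0 0 + a 1 1 = 0 by rewrite -(tr_mk2 _ (a 0 1) (a 1 0)) -mk2E.
    by rewrite h1 add0r => ->.
  have a11 : a 1 1 = - a 0 0.
    by apply/eqP; rewrite -addr_eq0 addrC -(tr_mk2 _ (a 0 1) (a 1 0)) -mk2E ta.
  move: fa; rewrite {1 2}(mk2E a) a11 Hf scale_mk2 => /mk2_inj[h1 h2 h3 _].
  rewrite mulmxBr; apply/eqP; rewrite subr_eq0; apply/eqP.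
  rewrite mul_mx_scalar (row3E (_ *m A)) h1 h2 h3.
  by apply/matrixP => i j; rewrite !mxE; case: j => [[|[|[|?]]] ?].
move/eqP/det0P => [v v0 vA].
exists (mk2 (v 0 0) (v 0 1) (v 0 2) (- v 0 0)); split; [|split].
- apply: contra v0; rewrite mk2_eq0 => /and4P[/eqP h1 /eqP h2 /eqP h3 _].
  by rewrite (row3E v) h1 h2 h3 row3_eq0 eqxx.
- by rewrite tr_mk2 subrr.
rewrite Hf scale_mk2 -(row3E v).
move: vA; rewrite mulmxBr => /eqP; rewrite subr_eq0 => /eqP ->.
by rewrite mul_mx_scalar !mxE mulrN.
Qed.

End Q.

Section T.
Variable R : realType.
Local Notation C := R[i].

Lemma conjcM (x y : C) : conjc (x * y) = conjc x * conjc y.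
Proof.
case: x => a b; case: y => c d; apply/eqP; rewrite eq_complex /=.
by apply/andP; split; apply/eqP; ring.
Qed.

Lemma conjcN (x : C) : conjc (- x) = - conjc x.
Proof. by case: x => a b; apply/eqP; rewrite eq_complex /= !eqxx. Qed.

Lemma conjcD (x y : C) : conjc (x + y) = conjc x + conjc y.
Proof. by case: x => a b; case: y => c d; apply/eqP; rewrite eq_complex /= opprD !eqxx. Qed.

Lemma conjcR (x : R) : conjc (x%:C) = x%:C.
Proof. by apply/eqP; rewrite eq_complex /= oppr0 !eqxx. Qed.

Lemma conjcKK (x : C) : conjc (conjc x) = x.
Proof. by case: x => a b; apply/eqP; rewrite eq_complex /= opprK !eqxx. Qed.

Lemma iE : ('i%R : C) = Complex 0 1.
Proof. by rewrite complexiE. Qed.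

Lemma conj_i : conjc ('i%R : C) = - 'i%R.
Proof. by rewrite iE; apply/eqP; rewrite eq_complex /= oppr0 !eqxx. Qed.

Lemma i_neq0 : ('i%R : C) != 0.
Proof. by rewrite iE eq_complex /= oner_eq0 andbF. Qed.

Lemma sqri : ('i%R : C) ^+ 2 = -1.
Proof. by rewrite iE sqr_i. Qed.

Lemma expiN (x : R) : conjc (expi x) = expi (- x).
Proof. by rewrite /expi cosN sinN. Qed.

Lemma expiD (x y : R) : expi x * expi y = expi (x + y).
Proof.
rewrite /expi cosD sinD; apply/eqP; rewrite eq_complex /=.
by apply/andP; split; apply/eqP; ring.
Qed.

Lemma expi0 : expi (0 : R) = 1.
Proof. by rewrite /expi cos0 sin0. Qed.

Lemma expiV (x : R) : expi x * expi (- x) = 1.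
Proof. by rewrite expiD subrr expi0. Qed.

Lemma expi_neq0 (x : R) : expi x != 0.
Proof. by apply/eqP => h; have := expiV x; rewrite h mul0r => /eqP; rewrite eq_sym oner_eq0. Qed.

Lemma conj_expi (x : R) : conjc (expi x) = (expi x)^-1.
Proof.
rewrite expiN; apply: (mulfI (expi_neq0 x)).
by rewrite expiV mulfV // expi_neq0.
Qed.

Lemma fJ_neq0 (J : R) : (- 'i * expi J : C) != 0.
Proof. by rewrite mulf_neq0 ?expi_neq0 // oppr_eq0 i_neq0. Qed.

Lemma conj_fJ (J : R) : conjc (- 'i * expi J : C) = (- 'i * expi J)^-1.
Proof.
apply: (mulfI (fJ_neq0 J)); rewrite mulfV ?fJ_neq0 //.
rewrite conjcM conjcN conj_i expiN opprK.
by rewrite mulrACA mulNr -expr2 sqri opprK mul1r expiV.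
Qed.

Lemma sin2J0 (J : R) : 2%:R * (sin (2%:R * J))%:C =
  (expi (- J) * conjc (- 'i * expi J) + (- 'i * expi J) * conjc (expi (- J))).
Proof.
rewrite conjcM conjcN conj_i !expiN opprK.
have -> : 2%:R * J = J *+ 2 by rewrite mulr_natl.
rewrite sin_mulr2n iE /expi cosN sinN; apply/eqP; rewrite eq_complex /= !opprK.
by apply/andP; split; apply/eqP; rewrite !mulr2n; ring.
Qed.

Lemma sin2J (J : R) : (sin (2%:R * J))%:C =
  (expi (- J) / (- 'i * expi J) + (- 'i * expi J) / expi (- J)) / 2%:R.
Proof.
by rewrite -conj_fJ -conj_expi -sin2J0 mulrAC divff ?mul1r // pnatr_eq0.
Qed.
End T.
Arguments conjc : simpl never.
Arguments expi : simpl never.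
Section U.
Variable R : realType.
Local Notation C := R[i].
Lemma Mplus_UJ (J : R) x y z w :
  Mplus (UJ J) (mk2 x y z w) =
  mk2 x ((sin (2%:R * J))%:C * y) ((sin (2%:R * J))%:C * z) w.
Proof.
apply/matrixP => i j; rewrite !mxE.
rewrite !big_ord_recr !big_ord0 /= !mxE.
rewrite !big_ord_recr !big_ord0 /= !mxE.
rewrite !big_ord_recr !big_ord0 /= !mxE /=.
have e0 := expi_neq0 (- J); have f0 := fJ_neq0 J.
have h2 : (2%:R : C) != 0 by rewrite pnatr_eq0.
case: i => [[|[|?]] ?]; case: j => [[|[|?]] ?] //=;
  rewrite ?conjc0 ?conj_expi ?conj_fJ ?sin2J. all: try (field => //); by rewrite !expi_neq0 i_neq0.
Qed.
End U.
Section V.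
Variable R : realType.
Local Notation C := R[i].

Definition su2 (al be : C) : 'M[C]_2 := mk2 al (- conjc be) be (conjc al).

Lemma dag_mk2 (a b c d : C) : dag (mk2 a b c d) = mk2 (conjc a) (conjc c) (conjc b) (conjc d).
Proof. by apply/matrixP => i j; rewrite !mxE; case: i => [[|[|?]] ?]; case: j => [[|[|?]] ?]. Qed.

Lemma mul_mk2 (a b c d a' b' c' d' : C) :
  mk2 a b c d *m mk2 a' b' c' d' =
  mk2 (a * a' + b * c') (a * b' + b * d') (c * a' + d * c') (c * b' + d * d').
Proof.
apply/matrixP => i j; rewrite !mxE !big_ord_recr big_ord0 /= !mxE add0r.
by case: i => [[|[|?]] ?]; case: j => [[|[|?]] ?].
Qed.

Lemma sub_mk3 (a b c d e f g h k l : C) :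
  mk3 a b c d e f g h k - l%:M = mk3 (a - l) b c d (e - l) f g h (k - l).
Proof.
apply/matrixP => i j; rewrite !mxE.
by case: i => [[|[|[|?]]] ?]; case: j => [[|[|[|?]]] ?] //=; rewrite subr0.
Qed.

Definition Asu2 (s al be : C) : 'M[C]_3 :=
  mk3 (al * conjc al - be * conjc be) (2%:R * al * conjc be) (2%:R * conjc al * be)
      (- s * al * be) (s * al ^+ 2) (- s * be ^+ 2)
      (- s * conjc al * conjc be) (- s * (conjc be) ^+ 2) (s * (conjc al) ^+ 2).

Lemma Phi_su2 (J : R) al be z x y :
  Phi (su2 al be) (UJ J) (mk2 z x y (- z)) =
  let v := row3 z x y *m Asu2 (sin (2%:R * J))%:C al be in
  mk2 (v 0 0) (v 0 1) (v 0 2) (- v 0 0).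
Proof.
rewrite /= !row3_mul /Phi Mplus_UJ /su2 dag_mk2 !mul_mk2 conjcN !conjcKK.
rewrite /Asu2 !mxE /=.
by congr mk2; ring.
Qed.

Lemma eig_su2 (J : R) al be l :
  al * conjc al + be * conjc be = 1 ->
  let s := (sin (2%:R * J))%:C in
  let a := al ^+ 2 + (conjc al) ^+ 2 in
  let b := al * conjc al - be * conjc be in
  nontriv_eig (Phi (su2 al be) (UJ J)) l <->
  l ^+ 3 - (b + s * a) * l ^+ 2 + (s * a + s ^+ 2 * b) * l - s ^+ 2 = 0.
Proof.
move=> n1 s a b.
rewrite (eig_det (A := Asu2 s al be)); last by move=> z x y; rewrite Phi_su2.
rewrite /Asu2 sub_mk3 det_mk3.
set P := (X in _ <-> X = 0).
have n1' : conjc al * al = 1 - be * conjc be by rewrite -n1 mulrC addrK.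
suff -> : forall t : C, t = - P -> (t = 0 <-> P = 0).
  by [].
  rewrite /P /a /b; ring: n1'.
by move=> t ->; split => [/eqP|->]; rewrite ?oppr0 // oppr_eq0 => /eqP.
Qed.
End V.
Section W.
Variable R : realType.
Local Notation C := R[i].

Lemma realign_UJ (J : R) : realign (UJ J) = UJ J.
Proof.
apply/matrixP => i j; rewrite !mxE.
by case: i => [[|[|[|[|?]]]] ?]; case: j => [[|[|[|[|?]]]] ?].
Qed.

Lemma realign_swap : realign (swap2 R) = swap2 R.
Proof.
apply/matrixP => i j; rewrite !mxE.
by case: i => [[|[|[|[|?]]]] ?]; case: j => [[|[|[|[|?]]]] ?].
Qed.

Lemma UJ_unitary (J : R) : UJ J *m dag (UJ J) = 1%:M.
Proof.
apply/matrixP => i j; rewrite !mxE !big_ord_recr big_ord0 /= !mxE /=.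
case: i => [[|[|[|[|?]]]] ?]; case: j => [[|[|[|[|?]]]] ?] //=; 
 rewrite ?conjc0 ?conj_expi ?conj_fJ; try (field; by rewrite ?expi_neq0 ?i_neq0).
Qed.

Lemma swap_unitary : swap2 R *m dag (swap2 R) = 1%:M.
Proof.
apply/matrixP => i j; rewrite !mxE !big_ord_recr big_ord0 /= !mxE /=.
by case: i => [[|[|[|[|?]]]] ?]; case: j => [[|[|[|[|?]]]] ?] //=; rewrite ?conjc0 ?conjc1; ring.
Qed.

Definition RSm (J : R) : 'M[C]_(2 * 2) :=
  \matrix_(r < 2 * 2, c < 2 * 2)
    match val r, val c with
    | 0%N, 0%N => expi (- J)
    | 0%N, 3%N => - 'i * expi J
    | 3%N, 0%N => - 'i * expi J
    | 3%N, 3%N => expi (- J)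
    | _, _ => 0
    end.

Lemma realign_UJS (J : R) : realign (UJ J *m swap2 R) = RSm J.
Proof.
apply/matrixP => i j; rewrite !mxE !big_ord_recr big_ord0 /= !mxE /=.
by case: i => [[|[|[|[|?]]]] ?]; case: j => [[|[|[|[|?]]]] ?] //=; ring.
Qed.

Definition Gm (J : R) : 'M[C]_(2 * 2) :=
  \matrix_(r < 2 * 2, c < 2 * 2)
    match val r, val c with
    | 0%N, 0%N => 2%:R
    | 0%N, 3%N => 2%:R * (sin (2%:R * J))%:C
    | 3%N, 0%N => 2%:R * (sin (2%:R * J))%:C
    | 3%N, 3%N => 2%:R
    | _, _ => 0
    end.

Lemma RS_G (J : R) : RSm J *m dag (RSm J) = Gm J.
Proof.
apply/matrixP => i j; rewrite !mxE !big_ord_recr big_ord0 /= !mxE /=.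
have h2 : (2%:R : C) != 0 by rewrite pnatr_eq0.
case: i => [[|[|[|[|?]]]] ?]; case: j => [[|[|[|[|?]]]] ?] //=;
 rewrite ?conjc0 ?conj_expi ?conj_fJ ?sin2J; try (field; by rewrite ?expi_neq0 ?i_neq0).
Qed.

Lemma trG2 (J : R) : \tr (Gm J ^+ 2) = (8%:R + 8%:R * sin (2%:R * J) ^+ 2)%:C.
Proof.
rewrite expr2 -mulmxE /mxtrace !big_ord_recr !big_ord0 /= !mxE !big_ord_recr !big_ord0 /= !mxE /=.
rewrite rmorphD rmorphM rmorphXn !rmorph_nat; ring.
Qed.
End W.
Section X.
Variable R : realType.
Local Notation C := R[i].

Lemma one_sq : (1%:M : 'M[C]_(2 * 2)) ^+ 2 = 1%:M.
Proof. by rewrite expr2 -mulmxE mul1mx. Qed.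

Lemma Eop_UJ (J : R) : Eop (UJ J) = 3%:R / 4%:R.
Proof. by rewrite /Eop realign_UJ UJ_unitary one_sq mxtrace1 /=; field. Qed.

Lemma Eop_swap : Eop (swap2 R) = 3%:R / 4%:R.
Proof. by rewrite /Eop realign_swap swap_unitary one_sq mxtrace1 /=; field. Qed.

Lemma Eop_UJS (J : R) : Eop (UJ J *m swap2 R) = (1 - sin (2%:R * J) ^+ 2) / 2%:R.
Proof. by rewrite /Eop realign_UJS RS_G trG2 /=; field. Qed.

Lemma ep_UJ (J : R) : ep (UJ J) = 2%:R / 3%:R * cos (2%:R * J) ^+ 2.
Proof. by rewrite /ep Eop_UJ Eop_swap Eop_UJS cos2sin2; field. Qed.
End X.
Section Y.
Variable R : realType.
Local Notation C := R[i].

Lemma wfam_mk2 (th ps : R) :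
  wfam th ps = mk2 (cos (th / 2%:R))%:C (- expi (ps / 2%:R) * (sin (th / 2%:R))%:C)
   (expi (- (ps / 2%:R)) * (sin (th / 2%:R))%:C) (cos (th / 2%:R))%:C.
Proof.
apply/matrixP => i j; rewrite !mxE.
case: i => [[|[|i]] Hi]; case: j => [[|[|j]] Hj]; try reflexivity;
  exfalso; by [move: Hi; rewrite !ltnS ltn0 | move: Hj; rewrite !ltnS ltn0].
Qed.

Lemma wfam_su2 (th ps : R) :
  wfam th ps = su2 (cos (th / 2%:R))%:C (expi (- (ps / 2%:R)) * (sin (th / 2%:R))%:C).
Proof.
rewrite wfam_mk2 /su2 conjcM !conjcR expiN opprK.
by rewrite mulNr.
Qed.

Definition kk : R := (Num.sqrt 2%:R)^-1.

Lemma vfam_mk2 (ph ps : R) :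
  vfam ph ps = mk2 (kk%:C * expi (ph / 2%:R)) (kk%:C * - expi (ps / 2%:R))
     (kk%:C * expi (- (ps / 2%:R))) (kk%:C * expi (- (ph / 2%:R))).
Proof.
apply/matrixP => i j; rewrite !mxE.
case: i => [[|[|i]] Hi]; case: j => [[|[|j]] Hj]; try reflexivity;
  exfalso; by [move: Hi; rewrite !ltnS ltn0 | move: Hj; rewrite !ltnS ltn0].
Qed.

Lemma vfam_su2 (ph ps : R) :
  vfam ph ps = su2 (kk%:C * expi (ph / 2%:R)) (kk%:C * expi (- (ps / 2%:R))).
Proof.
rewrite vfam_mk2 /su2 !conjcM !conjcR !expiN opprK.
by rewrite mulrN.
Qed.

Lemma expi_conj_mul (x : R) : expi x * conjc (expi x) = 1.
Proof. by rewrite expiN expiV. Qed.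

Lemma Rc_mul (x y : R) : x%:C * y%:C = (x * y)%:C.
Proof. by rewrite rmorphM. Qed.

Lemma Rc_add (x y : R) : x%:C + y%:C = (x + y)%:C.
Proof. by rewrite rmorphD. Qed.

Lemma wfam_norm (th ps : R) :
  let al := (cos (th / 2%:R))%:C in
  let be := expi (- (ps / 2%:R)) * (sin (th / 2%:R))%:C in
  al * conjc al + be * conjc be = 1.
Proof.
rewrite /= conjcM !conjcR mulrACA expi_conj_mul mul1r !Rc_mul Rc_add.
by rewrite -!expr2 cos2Dsin2 rmorph1.
Qed.

Arguments kk : simpl never.
Lemma kk2 : kk * kk = 2%:R^-1.
Proof. rewrite /kk -invfM -expr2 sqr_sqrtr; [reflexivity | exact: ler0n]. Qed.

Lemma vfam_norm (ph ps : R) :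
  let al := kk%:C * expi (ph / 2%:R) in
  let be := kk%:C * expi (- (ps / 2%:R)) in
  al * conjc al + be * conjc be = 1.
Proof.
cbv zeta; rewrite !conjcM !conjcR.
have E : forall a b : C, kk%:C * a * (kk%:C * b) = (kk * kk)%:C * (a * b).
  by move=> a b; rewrite -Rc_mul; ring.
rewrite !E !expi_conj_mul kk2 !mulr1 Rc_add.
have -> : (2%:R^-1 + 2%:R^-1 : R) = 1 by lra.
exact: rmorph1.
Qed.
End Y.
Section Z.
Variable R : realType.
Local Notation C := R[i].
Local Notation nc := (@Normc.normc R).

Lemma quad_fact (c1 c0 : C) : exists y1 y2, forall l : C,
  l ^+ 2 + c1 * l + c0 = (l - y1) * (l - y2).
Proof.
have [y1 h] := @solve_monicpoly C 2 (fun i => if i == 0%N then - c0 else - c1) isT.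
move: h; rewrite !big_ord_recr big_ord0 /= add0r expr0 expr1 mulr1 => h.
exists y1, (- c1 - y1) => l.
have e : y1 ^+ 2 + c1 * y1 + c0 = 0 by rewrite h; ring.
transitivity ((l - y1) * (l - (- c1 - y1)) + (y1 ^+ 2 + c1 * y1 + c0)); first by ring.
by rewrite e addr0.
Qed.

Lemma cubic_fact (c2 c1 c0 : C) : exists x1 x2 x3, forall l : C,
  l ^+ 3 + c2 * l ^+ 2 + c1 * l + c0 = (l - x1) * (l - x2) * (l - x3).
Proof.
have [x1 h] := @solve_monicpoly C 3
  (fun i => if i == 0%N then - c0 else if i == 1%N then - c1 else - c2) isT.
move: h; rewrite !big_ord_recr big_ord0 /= add0r expr0 expr1 mulr1 => h.
have e1 : x1 ^+ 3 + c2 * x1 ^+ 2 + c1 * x1 + c0 = 0 by rewrite h; ring.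
have [x2 [x3 hq]] := quad_fact (c2 + x1) (c1 + c2 * x1 + x1 ^+ 2).
exists x1, x2, x3 => l.
transitivity ((l - x1) * (l ^+ 2 + (c2 + x1) * l + (c1 + c2 * x1 + x1 ^+ 2))
   + (x1 ^+ 3 + c2 * x1 ^+ 2 + c1 * x1 + c0)); first by ring.
by rewrite e1 addr0 hq mulrA.
Qed.

Lemma nc_ge0 (x : C) : 0 <= nc x.
Proof. by case: x => a b; exact: sqrtr_ge0. Qed.

Lemma ncM (x y : C) : nc (x * y) = nc x * nc y.
Proof. exact: Normc.normcM. Qed.

Lemma ncX (x : C) n : nc (x ^+ n) = nc x ^+ n.
Proof.
elim: n => [|n IH]; first by rewrite !expr0 Normc.normc1.
by rewrite !exprS ncM IH.
Qed.

Lemma ncR (r : R) : nc r%:C = `|r|.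
Proof. by rewrite /Normc.normc /= expr0n /= addr0 sqrtr_sqr. Qed.

Lemma ncN (x : C) : nc (- x) = nc x.
Proof. by case: x => a b; rewrite /Normc.normc /= !sqrrN. Qed.

Lemma Lambda_spec (f : 'M[C]_2 -> 'M[C]_2) x1 x2 x3 :
  (forall l, nontriv_eig f l <-> (l - x1) * (l - x2) * (l - x3) = 0) ->
  (Lambda f = nc x1 \/ Lambda f = nc x2 \/ Lambda f = nc x3) /\
  [/\ nc x1 <= Lambda f, nc x2 <= Lambda f & nc x3 <= Lambda f].
Proof.
move=> H.
have [M [MS3 [h1 h2 h3]]] : exists M, (M = nc x1 \/ M = nc x2 \/ M = nc x3) /\
   [/\ nc x1 <= M, nc x2 <= M & nc x3 <= M].
  case: (leP (nc x1) (nc x2)) => h12; case: (leP (nc x2) (nc x3)) => h23;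
  case: (leP (nc x1) (nc x3)) => h13.
  all: try first [ exists (nc x1); split; [by left|split; lra]
             | exists (nc x2); split; [by right; left|split; lra]
             | exists (nc x3); split; [by right; right|split; lra] ].
set S := [set x : R | exists l : C, nontriv_eig f l /\ x = nc l].
have inS : forall l, (l - x1) * (l - x2) * (l - x3) = 0 -> S (nc l).
  by move=> l hl; exists l; split => //; apply/H.
have ubS : forall y, S y -> y <= M.
  move=> y [l [/H hl ->]].
  by move/eqP: hl; rewrite !mulf_eq0 !subr_eq0 => /orP[/orP[]|] /eqP ->.
have MS : S M.
  case: MS3 => [->|[->|->]]; apply: inS; by rewrite subrr ?mulr0 ?mul0r.
have -> : Lambda f = M.
  rewrite /Lambda -/S; apply/eqP; rewrite eq_le; apply/andP; split.
    by apply: ge_sup; [exists M | exact: ubS].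
  by apply: ub_le_sup => //; exists M.
by split.
Qed.
End Z.
Section F.
Variable R : realType.
Local Notation C := R[i].
Local Notation nc := (@Normc.normc R).

Lemma expi_sum (x : R) : expi x + expi (- x) = (2%:R * cos x)%:C.
Proof.
rewrite /expi cosN sinN; apply/eqP; rewrite eq_complex /=.
by apply/andP; split; apply/eqP; ring.
Qed.

Lemma v_eig (J ph ps : R) (l : C) :
  nontriv_eig (Phi (vfam ph ps) (UJ J)) l <->
  l ^+ 3 - (l ^+ 2 - l) * (cos ph * sin (2%:R * J))%:C
    - ((sin (2%:R * J)) ^+ 2)%:C = 0.
Proof.
rewrite vfam_su2.
apply: iff_trans (eig_su2 _ _ (vfam_norm ph ps)) _.
set S := (sin (2%:R * J))%:C.
have hb : (kk R)%:C * expi (ph / 2%:R) * conjc ((kk R)%:C * expi (ph / 2%:R)) -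
   (kk R)%:C * expi (- (ps / 2%:R)) * conjc ((kk R)%:C * expi (- (ps / 2%:R))) = 0.
  by rewrite !conjcM !conjcR -!mulrA !(mulrCA (expi _)) !expi_conj_mul subrr.
have ha : ((kk R)%:C * expi (ph / 2%:R)) ^+ 2 + (conjc ((kk R)%:C * expi (ph / 2%:R))) ^+ 2
   = (cos ph)%:C.
  rewrite conjcM conjcR expiN !exprMn -mulrDr !expr2 !expiD -!expr2.
  have -> : ph / 2%:R + ph / 2%:R = ph by field.
  rewrite -opprD.
  have -> : ph / 2%:R + ph / 2%:R = ph by field.
  rewrite expi_sum expr2 Rc_mul (@kk2 R) Rc_mul.
  by congr (_%:C); field.
rewrite hb ha.
suff -> : l ^+ 3 - (0 + S * (cos ph)%:C) * l ^+ 2 + (S * (cos ph)%:C + S ^+ 2 * 0) * l - S ^+ 2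
  = l ^+ 3 - (l ^+ 2 - l) * (cos ph * sin (2%:R * J))%:C - (sin (2%:R * J) ^+ 2)%:C by [].
by rewrite -Rc_mul rmorphXn /= -/S; ring.
Qed.
End F.
Section G.
Variable R : realType.
Local Notation C := R[i].
Local Notation nc := (@Normc.normc R).

Lemma w_roots (J th ps : R) : exists y1 y2 : C,
  (forall l, nontriv_eig (Phi (wfam th ps) (UJ J)) l <->
     (l - (sin (2%:R * J))%:C) * (l - y1) * (l - y2) = 0) /\
  y1 * y2 = (sin (2%:R * J))%:C /\
  y1 + y2 = (cos th)%:C * (1 + (sin (2%:R * J))%:C).
Proof.
set S := (sin (2%:R * J))%:C.
set B := (cos th)%:C * (1 + S).
have [y1 [y2 hq]] := quad_fact (- B) S.
have h0 := hq 0; have h1 := hq 1.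
have p12 : y1 * y2 = S.
  transitivity ((0 - y1) * (0 - y2)); first by ring.
  by rewrite -h0; ring.
exists y1, y2; split; last split => //.
  move=> l; rewrite wfam_su2.
  apply: iff_trans (eig_su2 _ _ (wfam_norm th ps)) _.
  set c := cos (th / 2%:R); set s' := sin (th / 2%:R).
  have cth : cos th = c ^+ 2 - s' ^+ 2.
    have -> : th = (th / 2%:R) *+ 2 by rewrite mulr2n; field.
    by rewrite cos_mulr2n sin2cos2 -/c mulr2n; ring.
  have hb : c%:C * conjc c%:C - expi (- (ps / 2%:R)) * s'%:C *
     conjc (expi (- (ps / 2%:R)) * s'%:C) = (cos th)%:C.
    rewrite conjcM !conjcR mulrACA expi_conj_mul mul1r !Rc_mul cth.
    by rewrite -!expr2 rmorphB.
  have ha : c%:C ^+ 2 + (conjc c%:C) ^+ 2 = 1 + (cos th)%:C.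
    rewrite conjcR cth rmorphB /= rmorphXn /= sin2cos2 rmorphB /= rmorph1 rmorphXn /=.
    by ring.
  rewrite hb ha.
  suff -> : l ^+ 3 - ((cos th)%:C + S * (1 + (cos th)%:C)) * l ^+ 2 +
     (S * (1 + (cos th)%:C) + S ^+ 2 * (cos th)%:C) * l - S ^+ 2 =
     (l - S) * (l ^+ 2 + - B * l + S) by rewrite hq mulrA.
  by rewrite /B; ring.
transitivity (1 + y1 * y2 - (1 - y1) * (1 - y2)); first by ring.
by rewrite -h1 p12 /B; ring.
Qed.
End G.
Section H.
Variable R : realType.
Local Notation C := R[i].
Local Notation nc := (@Normc.normc R).

Lemma le_cube (L t a b c : R) : 0 <= a -> 0 <= b -> 0 <= c ->
  a <= L -> b <= L -> c <= L -> 0 <= t -> t ^+ 3 = a * b * c -> t <= L.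
Proof.
move=> a0 b0 c0 aL bL cL t0 e.
have L0 : 0 <= L by apply: le_trans aL.
have h : a * b * c <= L ^+ 3.
  rewrite 2!exprS expr1 mulrA; apply: ler_pM => //; first exact: mulr_ge0.
  by apply: ler_pM.
have : t ^+ 3 <= L ^+ 3 by rewrite e.
by rewrite (ler_pXn2r (isT : (0 < 3)%N)) // nnegrE.
Qed.

Lemma le_sq (L t a b : R) : 0 <= a -> 0 <= b ->
  a <= L -> b <= L -> 0 <= t -> t ^+ 2 = a * b -> t <= L.
Proof.
move=> a0 b0 aL bL t0 e.
have L0 : 0 <= L by apply: le_trans aL.
have h : a * b <= L ^+ 2 by rewrite expr2; apply: ler_pM.
have : t ^+ 2 <= L ^+ 2 by rewrite e.
by rewrite (ler_pXn2r (isT : (0 < 2)%N)) // nnegrE.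
Qed.

Lemma cube_uniq (t r : R) : 0 <= t -> 0 <= r -> t ^+ 3 = r ^+ 3 -> t = r.
Proof.
move=> t0 r0 e; apply: (pexpIrn (isT : (0 < 3)%N)) => //; by rewrite nnegrE.
Qed.

Lemma v_roots (J ph ps : R) : exists x1 x2 x3 : C,
  (forall l, nontriv_eig (Phi (vfam ph ps) (UJ J)) l <->
     (l - x1) * (l - x2) * (l - x3) = 0) /\
  x1 * x2 * x3 = (sin (2%:R * J) ^+ 2)%:C /\
  (forall l, (l - x1) * (l - x2) * (l - x3) =
     l ^+ 3 - (l ^+ 2 - l) * (cos ph * sin (2%:R * J))%:C
    - ((sin (2%:R * J)) ^+ 2)%:C).
Proof.
set k := (cos ph * sin (2%:R * J))%:C.
set m := ((sin (2%:R * J)) ^+ 2)%:C.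
have [x1 [x2 [x3 hc]]] := cubic_fact (- k) k (- m).
have hp : forall l, (l - x1) * (l - x2) * (l - x3) = l ^+ 3 - (l ^+ 2 - l) * k - m.
  by move=> l; rewrite -hc; ring.
exists x1, x2, x3; split; last split => //.
  by move=> l; rewrite hp; exact: v_eig.
have := hp 0.
move=> e; transitivity (- ((0 - x1) * (0 - x2) * (0 - x3))); first by ring.
by rewrite e; ring.
Qed.

Lemma nc_sq (s : R) : nc ((s ^+ 2)%:C) = s ^+ 2.
Proof. by rewrite ncR ger0_norm // sqr_ge0. Qed.

Lemma v_lower (J ph ps : R) :
  0 <= sin (2%:R * J) ->
  sin (2%:R * J) `^ (2%:R / 3%:R) <= Lambda (Phi (vfam ph ps) (UJ J)).
Proof.
move=> s0.
have [x1 [x2 [x3 [H [hp _]]]]] := v_roots J ph ps.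
have [_ [h1 h2 h3]] := Lambda_spec H.
apply: (le_cube (nc_ge0 x1) (nc_ge0 x2) (nc_ge0 x3) h1 h2 h3).
  exact: powR_ge0.
rewrite -!ncM hp nc_sq.
rewrite -(powR_mulrn 3 (powR_ge0 _ _)) -powRrM.
have -> : 2%:R / 3%:R * 3%:R = 2%:R :> R by field.
by rewrite powR_mulrn.
Qed.

Lemma v_min (J ps : R) :
  0 <= sin (2%:R * J) ->
  Lambda (Phi (vfam (pi / 2%:R) ps) (UJ J)) = sin (2%:R * J) `^ (2%:R / 3%:R).
Proof.
move=> s0.
set t := sin (2%:R * J) `^ (2%:R / 3%:R).
have t0 : 0 <= t by exact: powR_ge0.
have t3 : t ^+ 3 = sin (2%:R * J) ^+ 2.
  rewrite -(powR_mulrn 3 t0) -powRrM.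
  have -> : 2%:R / 3%:R * 3%:R = 2%:R :> R by field.
  by rewrite powR_mulrn.
have [x1 [x2 [x3 [H [_ hp]]]]] := v_roots J (pi / 2%:R) ps.
have root : forall x, (x - x1) * (x - x2) * (x - x3) = 0 -> nc x = t.
  move=> x hx; apply: cube_uniq; [exact: nc_ge0 | exact: t0 |].
  rewrite t3 -ncX -nc_sq; congr nc.
  move: hx; rewrite hp cos_pihalf mul0r mulr0 subr0 => /eqP.
  by rewrite subr_eq0 => /eqP.
have [hL _] := Lambda_spec H.
by case: hL => [->|[->|->]]; apply: root; rewrite subrr ?mulr0 ?mul0r.
Qed.

Lemma w_lower (J th ps : R) :
  0 <= sin (2%:R * J) ->
  Num.sqrt (sin (2%:R * J)) <= Lambda (Phi (wfam th ps) (UJ J)).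
Proof.
move=> s0.
have [y1 [y2 [H [p12 _]]]] := w_roots J th ps.
have [_ [_ h2 h3]] := Lambda_spec H.
apply: (le_sq (nc_ge0 y1) (nc_ge0 y2) h2 h3); first exact: sqrtr_ge0.
by rewrite sqr_sqrtr // -ncM p12 ncR ger0_norm.
Qed.

Lemma w_min (J : R) :
  0 <= sin (2%:R * J) -> sin (2%:R * J) <= 1 ->
  Lambda (Phi (wfam (pi / 2%:R) 0) (UJ J)) = Num.sqrt (sin (2%:R * J)).
Proof.
move=> s0 s1.
set s := sin (2%:R * J).
have [y1 [y2 [H [p12 sm]]]] := w_roots J (pi / 2%:R) 0.
move: sm; rewrite cos_pihalf mul0r => /eqP; rewrite addr_eq0 => /eqP y2E.
have ny : nc y1 = Num.sqrt s.
  have : nc y1 ^+ 2 = s.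
    rewrite -ncX expr2 {2}y2E mulrN p12 ncN ncR.
    by rewrite ger0_norm.
  move=> e; rewrite -e sqrtr_sqr ger0_norm //; exact: nc_ge0.
have ny2 : nc y2 = Num.sqrt s by rewrite -ny y2E ncN.
have sq : s <= Num.sqrt s.
  have q0 := sqrtr_ge0 s; have q2 : Num.sqrt s ^+ 2 = s := sqr_sqrtr s0.
  have q1 : Num.sqrt s <= 1 by rewrite -sqrtr1 ler_sqrt.
  by rewrite -{1}q2 expr2 -[X in _ <= X]mulr1 ler_wpM2l.
have [hL [_ h2 _]] := Lambda_spec H.
rewrite ny in h2.
apply/eqP; rewrite eq_le h2 andbT.
case: hL => [->|[->|->]]; rewrite ?ny ?ny2 //.
by rewrite ncR ger0_norm.
Qed.
End H.
Unset Implicit Arguments.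
Theorem mainTheorem10 (R : realType) (J : R) :
  0 <= J <= pi / 4%:R ->
  (* e_p(U(J)) = 2/3 cos^2(2J) *)
  ep (UJ J) = 2%:R / 3%:R * cos (2%:R * J) ^+ 2 /\
  (* (i) family w(theta, psi) *)
  (is_min [set y : R | exists theta psi : R,
              0 <= theta <= pi /\ 0 <= psi <= 4%:R * pi /\
              y = Lambda (Phi (wfam theta psi) (UJ J))]
          (Num.sqrt (sin (2%:R * J))) /\
   - ln (Num.sqrt (sin (2%:R * J)))
     = - (1 / 4%:R) * ln (1 - 3%:R / 2%:R * ep (UJ J))) /\
  (* (ii) family v(phi, psi) *)
  ((forall phi psi : R, 0 <= phi <= 4%:R * pi -> 0 <= psi <= 4%:R * pi ->
     forall l : R[i],
       nontriv_eig (Phi (vfam phi psi) (UJ J)) l <->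
       l ^+ 3 - (l ^+ 2 - l) * (cos phi * sin (2%:R * J))%:C
         - ((sin (2%:R * J)) ^+ 2)%:C = 0) /\
   is_min [set y : R | exists phi psi : R,
              0 <= phi <= 4%:R * pi /\ 0 <= psi <= 4%:R * pi /\
              y = Lambda (Phi (vfam phi psi) (UJ J))]
          (sin (2%:R * J) `^ (2%:R / 3%:R)) /\
   (forall psi : R, 0 <= psi <= 4%:R * pi ->
      Lambda (Phi (vfam (pi / 2%:R) psi) (UJ J)) = sin (2%:R * J) `^ (2%:R / 3%:R)) /\
   - ln (sin (2%:R * J) `^ (2%:R / 3%:R))
     = - (1 / 3%:R) * ln (1 - 3%:R / 2%:R * ep (UJ J))).
Proof.
move=> /andP[J0 J1].
have p0 := pi_ge0 R.
have s0 : 0 <= sin (2%:R * J).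
  by apply: sin_ge0_pi; apply/andP; split; lra.
have s1 : sin (2%:R * J) <= 1 by exact: sin_le1.
have ep1 : 1 - 3%:R / 2%:R * ep (UJ J) = sin (2%:R * J) ^+ 2.
  by rewrite ep_UJ cos2sin2; field.
have lnsq : ln (sin (2%:R * J) ^+ 2) = 2%:R * ln (sin (2%:R * J)).
  case: (ltrP 0 (sin (2%:R * J))) => hs.
    rewrite lnXn. 2: exact: hs. by rewrite mulr2n; ring.
  have -> : sin (2%:R * J) = 0 by apply/eqP; rewrite eq_le hs s0.
  by rewrite expr0n /= ln0 ?lexx // mulr0.
split; first exact: ep_UJ.
split.
  split.
    split.
      exists (pi / 2%:R), 0; split; first by apply/andP; split; lra.
      split; first by apply/andP; split; lra.
      by rewrite w_min.
    by move=> y [th [ps [_ [_ ->]]]]; exact: w_lower.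
  rewrite ep1 lnsq.
  case: (ltrP 0 (sin (2%:R * J))) => hs.
    have -> : Num.sqrt (sin (2%:R * J)) = sin (2%:R * J) `^ 2%:R^-1.
      by rewrite powR12_sqrt.
    by rewrite ln_powR; field.
  have -> : sin (2%:R * J) = 0 by apply/eqP; rewrite eq_le hs s0.
  by rewrite sqrtr0 ln0 ?lexx // !mulr0 oppr0.
split.
  by move=> ph ps _ _ l; exact: v_eig.
split.
  split.
    exists (pi / 2%:R), 0; split; first by apply/andP; split; lra.
    split; first by apply/andP; split; lra.
    by rewrite v_min.
  by move=> y [ph [ps [_ [_ ->]]]]; exact: v_lower.
split.
  by move=> ps _; exact: v_min.
by rewrite ep1 lnsq ln_powR; field.
Qed.
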